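(* Let $\mathbf{A}$ be a real $n\times n$ matrix that is totally $J$-sign-symmetric (TJS) (respectively, strictly totally $J$-sign-symmetric (STJS)). Then $\mathbf{A}^T$, as well as every principal submatrix of $\mathbf{A}$ and of $\mathbf{A}^T$, is TJS (respectively, STJS).
   Context: For $J\subseteq[m]=\{1,\ldots,m\}$, $J^c=[m]\setminus J$, an $m\times m$ matrix $(a_{ik})$ is $J$-sign-symmetric if $a_{ik}\ge0$ on $(J\times J)\cup(J^c\times J^c)$ and $a_{ik}\le0$ on $(J\times J^c)\cup(J^c\times J)$; strictly $J$-sign-symmetric if these inequalities are strict. The $j$th compound matrix $\mathbf{A}^{(j)}$ is the $\binom{n}{j}\times\binom{n}{j}$ matrix of all $j\times j$ minors with index sets in lexicographic order. $\mathbf{A}$ is TJS (resp. STJS) if $\mathbf{A}$ is $J$-sign-symmetric (resp. strictly $J$-sign-symmetric) for some $J\subseteq[n]$ and for every $j=2,\ldots,n$ the compound $\mathbf{A}^{(j)}$ is $J_j$-sign-symmetric (resp. strictly $J_j$-sign-symmetric) for some subset $J_j$ of its index set. A principal submatrix $\mathbf{A}(M)$, $M\subseteq[n]$, consists of the rows and columns with indices in $M$. *)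

(* Defs.v *)
From mathcomp Require Import all_boot all_order all_algebra.
Set Implicit Arguments. Unset Strict Implicit. Unset Printing Implicit Defensive.
Import Order.TTheory GRing.Theory Num.Theory.
Local Open Scope ring_scope.

Section Defs.
Variable R : realFieldType.

Definition sign_sym (T : finType) (P : pred T) (f : T -> T -> R) (J : {set T}) :=
  forall i k, P i -> P k ->
    if (i \in J) == (k \in J) then 0 <= f i k else f i k <= 0.

Definition strict_sign_sym (T : finType) (P : pred T) (f : T -> T -> R) (J : {set T}) :=
  forall i k, P i -> P k ->
    if (i \in J) == (k \in J) then 0 < f i k else f i k < 0.

(* entry access by natural indices (0 outside the range) *)
Definition entry n (A : 'M[R]_n) (i j : nat) : R :=
  match insub i, insub j with
  | Some i', Some j' => A i' j'
  | _, _ => 0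
  end.

(* elements of S in increasing order *)
Definition sorted_idx n (S : {set 'I_n}) : seq nat := [seq val x | x <- enum S].

Definition minor n (A : 'M[R]_n) (k : nat) (S T : {set 'I_n}) : R :=
  \det (\matrix_(a < k, b < k)
          entry A (nth 0%N (sorted_idx S) a) (nth 0%N (sorted_idx T) b)).

(* The j-th compound matrix, indexed by the j-subsets of [n]
   (the ordering of the index set is irrelevant for sign-symmetry
   with an arbitrary subset J_j of the index set). *)
Definition compound n (A : 'M[R]_n) (j : nat) : {set 'I_n} -> {set 'I_n} -> R :=
  fun S T => minor A j S T.

Definition is_jsubset n (j : nat) : pred {set 'I_n} := fun S => #|S| == j.

Definition TJS n (A : 'M[R]_n) : Prop :=
  (exists J : {set 'I_n}, sign_sym predT (fun i k => A i k) J) /\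
  (forall j : nat, (2 <= j <= n)%N ->
     exists Jj : {set {set 'I_n}}, sign_sym (@is_jsubset n j) (compound A j) Jj).

Definition STJS n (A : 'M[R]_n) : Prop :=
  (exists J : {set 'I_n}, strict_sign_sym predT (fun i k => A i k) J) /\
  (forall j : nat, (2 <= j <= n)%N ->
     exists Jj : {set {set 'I_n}}, strict_sign_sym (@is_jsubset n j) (compound A j) Jj).

(* principal submatrix A(M): rows and columns in M, in increasing order *)
Definition psub n (A : 'M[R]_n) (M : {set 'I_n}) : 'M[R]_#|M| :=
  \matrix_(a, b) A (enum_val a) (enum_val b).

End Defs.

(* Main.v *)
Require Import Defs.
From mathcomp Require Import all_boot all_order all_algebra.
Set Implicit Arguments. Unset Strict Implicit. Unset Printing Implicit Defensive.
Import Order.TTheory GRing.Theory Num.Theory.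
Local Open Scope ring_scope.

Section Gen.
Variable R : realFieldType.
Variable Q : bool -> R -> bool.

Definition gen (T : finType) (P : pred T) (f : T -> T -> R) (J : {set T}) :=
  forall i k, P i -> P k -> Q ((i \in J) == (k \in J)) (f i k).

Lemma gen_tr (T : finType) (P : pred T) f J :
  gen P f J -> gen P (fun i k => f k i) J.
Proof. by move=> H i k Pi Pk; rewrite eq_sym; apply: H. Qed.

Lemma gen_ext (T : finType) (P : pred T) f f' J :
  (forall i k, P i -> P k -> f i k = f' i k) -> gen P f J -> gen P f' J.
Proof. by move=> E H i k Pi Pk; rewrite -E //; apply: H. Qed.

Lemma gen_pre (T U : finType) (g : U -> T) (P : pred T) (P' : pred U) f J :
  (forall u, P' u -> P (g u)) -> gen P f J ->
  gen P' (fun u v => f (g u) (g v)) [set u | g u \in J].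
Proof. by move=> Hg H i k Pi Pk; rewrite !inE; apply: H; apply: Hg. Qed.

Definition TJSg n (A : 'M[R]_n) : Prop :=
  (exists J : {set 'I_n}, gen predT (fun i k => A i k) J) /\
  (forall j : nat, (2 <= j <= n)%N ->
     exists Jj : {set {set 'I_n}}, gen (@is_jsubset n j) (compound A j) Jj).

Lemma entry_tr n (A : 'M[R]_n) x y : entry A^T x y = entry A y x.
Proof. by rewrite /entry; case: (insub x) => [a|]; case: (insub y) => [b|] //; rewrite mxE. Qed.

Lemma compound_tr n (A : 'M[R]_n) j S T : compound A^T j S T = compound A j T S.
Proof.
rewrite /compound /minor -det_tr; congr (\det _); apply/matrixP => a b.
by rewrite !mxE entry_tr.
Qed.

Lemma TJSg_tr n (A : 'M[R]_n) : TJSg A -> TJSg A^T.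
Proof.
case=> [[J HJ] Hc]; split.
  exists J; apply: gen_ext (gen_tr HJ) => i k _ _; by rewrite mxE.
move=> j hj; case: (Hc j hj) => Jj HJj; exists Jj.
apply: gen_ext (gen_tr HJj) => S T _ _; by rewrite compound_tr.
Qed.

Lemma sorted_idx_sorted n (S : {set 'I_n}) : sorted ltn (sorted_idx S).
Proof.
rewrite /sorted_idx /enum_mem -enumT sorted_map.
apply: sorted_filter; first by move=> a b c /=; apply: ltn_trans.
by rewrite -sorted_map val_enum_ord iota_ltn_sorted.
Qed.

Lemma enum_val_mono n (M : {set 'I_n}) (a b : 'I_#|M|) :
  (a < b)%N -> (val (enum_val a) < val (enum_val b))%N.
Proof.
move=> ab.
have s : sorted (relpre val ltn) (enum M).
  rewrite -sorted_map; exact: (sorted_idx_sorted M).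
rewrite (enum_val_nth (enum_val a)) (enum_val_nth (enum_val a) b).
apply: (sorted_ltn_nth _ _ s) => //.
- by move=> x y z /=; apply: ltn_trans.
- by rewrite inE -cardE.
- by rewrite inE -cardE.
Qed.

Lemma sorted_idx_im n (M : {set 'I_n}) (S : {set 'I_#|M|}) :
  sorted_idx (enum_val @: S) = map (fun x => val (enum_val x)) (enum S).
Proof.
apply: (irr_sorted_eq (leT:=ltn)).
- by move=> a b c; apply: ltn_trans.
- by move=> x; rewrite /= ltnn.
- exact: sorted_idx_sorted.
- rewrite sorted_map.
  have := sorted_idx_sorted S; rewrite /sorted_idx sorted_map => s.
  apply: sub_sorted s => x y /=; exact: enum_val_mono.
move=> x; apply/idP/idP.
  case/mapP=> y; rewrite mem_enum => /imsetP [z zS ->] ->.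
  by apply/mapP; exists z; rewrite ?mem_enum.
case/mapP=> z; rewrite mem_enum => zS ->.
by apply/mapP; exists (enum_val z); rewrite // mem_enum; apply: imset_f.
Qed.

Lemma entry_val n (A : 'M[R]_n) (x y : 'I_n) : entry A (val x) (val y) = A x y.
Proof. by rewrite /entry !valK. Qed.

Lemma compound_psub n (A : 'M[R]_n) (M : {set 'I_n}) j (S T : {set 'I_#|M|}) :
  #|S| = j -> #|T| = j ->
  compound (psub A M) j S T = compound A j (enum_val @: S) (enum_val @: T).
Proof.
move=> cS cT; rewrite /compound /minor; congr (\det _); apply/matrixP => a b.
rewrite !mxE !sorted_idx_im.
have aS : (a < size (enum S))%N by rewrite -cardE cS.
have bT : (b < size (enum T))%N by rewrite -cardE cT.
have i0 : 'I_#|M|.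
  case: (enum S) aS => [|x _] //.
rewrite /sorted_idx.
rewrite (nth_map i0 0%N _ aS) (nth_map i0 0%N _ bT) (nth_map i0 0%N _ aS) (nth_map i0 0%N _ bT).
by rewrite !entry_val mxE.
Qed.

Lemma TJSg_psub n (A : 'M[R]_n) (M : {set 'I_n}) : TJSg A -> TJSg (psub A M).
Proof.
case=> [[J HJ] Hc]; split.
  exists [set u | enum_val u \in J].
  apply: gen_ext (gen_pre (g := enum_val) (P' := predT) _ HJ) => //.
  by move=> i k _ _; rewrite mxE.
move=> j /andP [j2 jm].
have jn : (j <= n)%N.
  apply: leq_trans jm _; by rewrite -[X in (_ <= X)%N]card_ord max_card.
case: (Hc j (introT andP (conj j2 jn))) => Jj HJj.
exists [set S : {set 'I_#|M|} | ((@enum_val _ (mem M)) @: S) \in Jj].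
have Hg : forall S : {set 'I_#|M|}, is_jsubset j S -> is_jsubset j ((@enum_val _ (mem M)) @: S).
  by move=> S; rewrite /is_jsubset card_imset //; apply: enum_val_inj.
have G := gen_pre Hg HJj.
apply: gen_ext G => S T /eqP cS /eqP cT.
by rewrite /= compound_psub.
Qed.

End Gen.

Theorem proposition29 (R : realFieldType) (n : nat) (A : 'M[R]_n) :
  (TJS A ->
     TJS A^T /\
     (forall M : {set 'I_n}, TJS (psub A M) /\ TJS (psub A^T M))) /\
  (STJS A ->
     STJS A^T /\
     (forall M : {set 'I_n}, STJS (psub A M) /\ STJS (psub A^T M))).
Proof.
split.
- move=> H; have H' : TJSg (fun b x => if b then 0 <= x else x <= 0) A := H.
  split; first exact: (TJSg_tr H').
  move=> M; split; first exact: (TJSg_psub M H').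
  exact: (TJSg_psub M (TJSg_tr H')).
- move=> H; have H' : TJSg (fun b x => if b then 0 < x else x < 0) A := H.
  split; first exact: (TJSg_tr H').
  move=> M; split; first exact: (TJSg_psub M H').
  exact: (TJSg_psub M (TJSg_tr H')).
Qed.
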